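(* Let $s\ge 1$ and let $2\le n_0\le n_1\le\dots\le n_s$ be integers. For $0\le i\le s-1$ let $k_i=\frac{\log n_s}{\log n_i}$, and let $x_0$ be the unique root of the equation $sx-1-\sum_{j=0}^{s-1}x^{\frac{k_j-1}{k_j}}=0$ in the interval $[1,\infty)$. Then $$\frac{s+1}{s}\le x_0<\max(k_0,e+2).$$
   Context: All logarithms are to base 2. *)

(* Defs.v *)
From Stdlib Require Import Reals Lra Lia.
Open Scope R_scope.

Fixpoint sumR (f : nat -> R) (m : nat) : R :=
  match m with
  | O => 0
  | S m' => sumR f m' + f m'
  end.

(* k_i = log n_s / log n_i  (base-independent ratio; we use ln) *)
Definition kexp (n : nat -> nat) (s i : nat) : R :=
  ln (INR (n s)) / ln (INR (n i)).

Definition froot (n : nat -> nat) (s : nat) (x : R) : R :=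
  INR s * x - 1 - sumR (fun j => Rpower x ((kexp n s j - 1) / kexp n s j)) s.

(* Main.v *)
Require Import Defs.
From Stdlib Require Import Reals Lra Lia.
Open Scope R_scope.

Lemma sumR_le (f : nat -> R) (c : R) (m : nat) :
  (forall j, (j < m)%nat -> f j <= c) -> sumR f m <= INR m * c.
Proof.
  induction m as [|m IH]; intros H; cbn [sumR].
  - simpl; lra.
  - rewrite S_INR. assert (H1 := H m (Nat.lt_succ_diag_r m)).
    assert (sumR f m <= INR m * c) by (apply IH; intros; apply H; lia). lra.
Qed.

Lemma sumR_ge (f : nat -> R) (c : R) (m : nat) :
  (forall j, (j < m)%nat -> c <= f j) -> INR m * c <= sumR f m.
Proof.
  induction m as [|m IH]; intros H; cbn [sumR].
  - simpl; lra.
  - rewrite S_INR. assert (H1 := H m (Nat.lt_succ_diag_r m)).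
    assert (INR m * c <= sumR f m) by (apply IH; intros; apply H; lia). lra.
Qed.

Lemma ln_le' (x y : R) : 0 < x -> x <= y -> ln x <= ln y.
Proof. intros H1 H2. destruct H2 as [H2|H2]. left; apply ln_increasing; auto. subst; lra. Qed.

Lemma ln_gt_0' (x : R) : 1 < x -> 0 < ln x.
Proof. intros H. rewrite <- ln_1. apply ln_increasing; lra. Qed.

Lemma exp_le' (x y : R) : x <= y -> exp x <= exp y.
Proof. intros [H|H]. left; apply exp_increasing; auto. subst; lra. Qed.

Lemma mono_n (s : nat) (n : nat -> nat)
  (hmono : forall i : nat, (i < s)%nat -> (n i <= n (S i))%nat) :
  forall i j, (i <= j)%nat -> (j <= s)%nat -> (n i <= n j)%nat.
Proof.
  intros i j Hij. induction Hij; intros Hs.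
  - lia.
  - assert (n m <= n (S m))%nat by (apply hmono; lia).
    assert (n i <= n m)%nat by (apply IHHij; lia). lia.
Qed.

Theorem lemma6p2 (s : nat) (n : nat -> nat)
  (hs : (1 <= s)%nat)
  (hn0 : (2 <= n 0%nat)%nat)
  (hmono : forall i : nat, (i < s)%nat -> (n i <= n (S i))%nat)
  (x0 : R) (hx0 : 1 <= x0) (hroot : froot n s x0 = 0)
  (huniq : forall y : R, 1 <= y -> froot n s y = 0 -> y = x0) :
  (INR s + 1) / INR s <= x0 /\ x0 < Rmax (kexp n s 0) (exp 1 + 2).
Proof.
  assert (Hs1 : 1 <= INR s) by (replace 1 with (INR 1) by reflexivity; apply le_INR; lia).
  set (K := kexp n s 0).
  assert (Hlnpos : forall j, (j <= s)%nat -> 0 < ln (INR (n 0%nat)) <= ln (INR (n j))).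
  { intros j Hj. assert (H0j := mono_n s n hmono 0 j ltac:(lia) Hj).
    assert (2 <= INR (n 0%nat)) by (replace 2 with (INR 2) by reflexivity; apply le_INR; lia).
    assert (INR (n 0%nat) <= INR (n j)) by (apply le_INR; lia).
    split. apply ln_gt_0'; lra. apply ln_le'; lra. }
  assert (Hk : forall j, (j <= s)%nat -> 1 <= kexp n s j <= K).
  { intros j Hj. unfold K, kexp.
    destruct (Hlnpos j Hj) as [A B]. destruct (Hlnpos s (le_n s)) as [C D].
    assert (ln (INR (n j)) <= ln (INR (n s))).
    { assert (Hjs := mono_n s n hmono j s Hj (le_n s)).
      assert (INR (n j) <= INR (n s)) by (apply le_INR; lia).
      assert (2 <= INR (n 0%nat)) by (replace 2 with (INR 2) by reflexivity; apply le_INR; lia).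
      assert (INR (n 0%nat) <= INR (n j)) by (apply le_INR; apply mono_n with s; auto; lia).
      apply ln_le'; lra. }
    split.
    - apply Rmult_le_reg_r with (ln (INR (n j))); [lra|].
      unfold Rdiv. rewrite Rmult_assoc, Rinv_l; lra.
    - unfold Rdiv. apply Rmult_le_compat_l; [lra|].
      apply Rinv_le_contravar; lra. }
  assert (Ha : forall j, (j < s)%nat ->
     0 <= (kexp n s j - 1) / kexp n s j <= (K - 1) / K).
  { intros j Hj. destruct (Hk j ltac:(lia)) as [A B].
    replace ((kexp n s j - 1) / kexp n s j) with (1 - / kexp n s j) by (field; lra).
    replace ((K - 1) / K) with (1 - / K) by (field; lra).
    assert (/ kexp n s j <= 1) by (rewrite <- Rinv_1; apply Rinv_le_contravar; lra).
    assert (/ K <= / kexp n s j) by (apply Rinv_le_contravar; lra). lra. }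
  unfold froot in hroot.
  split.
  - assert (INR s * 1 <= sumR (fun j => Rpower x0 ((kexp n s j - 1) / kexp n s j)) s).
    { apply sumR_ge. intros j Hj. destruct (Ha j Hj) as [A B].
      unfold Rpower. apply Rle_trans with (exp 0); [rewrite exp_0; lra|]. apply exp_le'.
      assert (0 <= ln x0). { rewrite <- ln_1. exact (ln_le' 1 x0 ltac:(lra) hx0). } apply Rmult_le_pos; lra. }
    apply Rmult_le_reg_r with (INR s); [lra|].
    unfold Rdiv. rewrite Rmult_assoc, Rinv_l by lra. lra.
  - apply Rnot_le_lt. intro HM.
    set (y := x0) in *.
    assert (HyK : K <= y) by (eapply Rle_trans; [apply Rmax_l|exact HM]).
    assert (Hye : exp 1 + 2 <= y) by (eapply Rle_trans; [apply Rmax_r|exact HM]).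
    assert (He : 0 < exp 1) by apply exp_pos.
    destruct (Hk 0%nat ltac:(lia)) as [HK1 _]. fold K in HK1.
    set (L := ln y).
    assert (HL : 2 - exp 1 / y <= L).
    { assert (H1 := exp_ineq1_le (ln (exp 1 / y))).
      rewrite exp_ln in H1 by (apply Rdiv_lt_0_compat; lra).
      replace (ln (exp 1 / y)) with (1 - ln y) in H1 by (unfold Rdiv; rewrite ln_mult, ln_Rinv, ln_exp; try apply Rinv_0_lt_compat; lra). unfold L. lra. }
    set (E := exp (L / K)).
    assert (HE : 1 + L / K <= E) by apply exp_ineq1_le.
    assert (Hsum : sumR (fun j => Rpower y ((kexp n s j - 1) / kexp n s j)) s
                   <= INR s * (y / E)).
    { apply sumR_le. intros j Hj. destruct (Ha j Hj) as [A B].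
      replace (y / E) with (Rpower y ((K - 1) / K)).
      - unfold Rpower. apply exp_le'.
        assert (0 <= ln y) by (rewrite <- ln_1; apply ln_le'; lra). nra.
      - unfold Rpower, E. replace ((K - 1) / K * ln y) with (ln y + - (L / K))
          by (unfold L; field; lra).
        rewrite exp_plus, exp_ln by lra. rewrite exp_Ropp. reflexivity. }
    assert (HLy : L * (y - 1) > y).
    { assert (y * L * (y - 1) >= (2 * y - exp 1) * (y - 1)).
      { assert (y * L >= 2 * y - exp 1).
        { assert (y * (exp 1 / y) = exp 1) by (field; lra). nra. }
        nra. }
      nra. }
    assert (Ht : L / K * (y - 1) > 1).
    { unfold Rdiv. rewrite Rmult_assoc, (Rmult_comm (/ K)), <- Rmult_assoc.
      apply Rmult_gt_reg_r with K; [lra|]. rewrite Rmult_assoc, Rinv_l by lra. lra. }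
    assert (HEpos : 0 < E) by apply exp_pos.
    assert (Hmain : y * (E - 1) > E) by nra.
    assert (INR s * y * (E - 1) > E) by nra.
    assert (INR s * (y / E) * E = INR s * y) by (field; lra).
    nra.
Qed.
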